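(* Let $K$ be a simplicial complex on the ground set $[m]$ whose Alexander dual $K^{\circ}$ is vertex decomposable, and let $v$ be a shedding vertex of $K^{\circ}$. Then $\mathrm{link}_K(v)$ and $K\setminus v$ (as complexes on $[m]\setminus\{v\}$) have vertex decomposable Alexander duals (taken with respect to the ground set $[m]\setminus\{v\}$).
   Context: A simplicial complex $K$ on a finite ground set $V$ is a family of subsets of $V$ closed under taking subsets; its Alexander dual is $K^{\circ}=\{\sigma\subseteq V:V\setminus\sigma\notin K\}$. For a vertex $v$, the deletion $K\setminus v=\{\sigma\in K: v\notin\sigma\}$ and the link $\mathrm{link}_K(v)=\{\sigma\in K: v\notin\sigma,\ \sigma\cup\{v\}\in K\}$ are complexes on $V\setminus\{v\}$. A complex $K$ is vertex decomposable if either (i) $K$ is a simplex (all subsets of some set) or $K=\{\emptyset\}$, or (ii) there is a vertex $v$, called a shedding vertex, such that $K\setminus v$ and $\mathrm{link}_K(v)$ are vertex decomposable and no facet (inclusion-maximal face) of $\mathrm{link}_K(v)$ is a facet of $K\setminus v$. *)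

(* Defs.v *)
From mathcomp Require Import all_boot.
Set Implicit Arguments. Unset Strict Implicit. Unset Printing Implicit Defensive.

Section Complexes.
Variable T : finType.

Definition is_complex (V : {set T}) (K : {set {set T}}) : Prop :=
  (forall s : {set T}, s \in K -> s \subset V) /\
  (forall s t : {set T}, s \in K -> t \subset s -> t \in K).

Definition alex_dual (V : {set T}) (K : {set {set T}}) : {set {set T}} :=
  [set s : {set T} | (s \subset V) && ((V :\: s) \notin K)].

Definition deletion (K : {set {set T}}) (v : T) : {set {set T}} :=
  [set s in K | v \notin s].

Definition link (K : {set {set T}}) (v : T) : {set {set T}} :=
  [set s in K | (v \notin s) && ((v |: s) \in K)].

Definition facet (K : {set {set T}}) (s : {set T}) : Prop :=
  s \in K /\ (forall t : {set T}, t \in K -> s \subset t -> t = s).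

Inductive vdec : {set T} -> {set {set T}} -> Prop :=
  | vdec_simplex (V S : {set T}) (K : {set {set T}}) :
      K = powerset S -> vdec V K
  | vdec_shed (V : {set T}) (K : {set {set T}}) (v : T) :
      v \in V ->
      vdec (V :\ v) (deletion K v) ->
      vdec (V :\ v) (link K v) ->
      (forall s : {set T}, facet (link K v) s -> ~ facet (deletion K v) s) ->
      vdec V K.

Definition shedding_vertex (V : {set T}) (K : {set {set T}}) (v : T) : Prop :=
  [/\ v \in V,
      vdec (V :\ v) (deletion K v),
      vdec (V :\ v) (link K v) &
      forall s : {set T}, facet (link K v) s -> ~ facet (deletion K v) s].

End Complexes.

(* Main.v *)
Require Import Defs.
From mathcomp Require Import all_boot.

Lemma link_dual (m : nat) (K : {set {set 'I_m}}) (v : 'I_m) :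
  is_complex [set: 'I_m] K ->
  alex_dual ([set: 'I_m] :\ v) (link K v) = deletion (alex_dual [set: 'I_m] K) v.
Proof.
move=> [_ HK]; apply/setP => s; rewrite !inE subsetT /=.
case vs: (v \in s) => /=; rewrite ?andbF.
  apply/negbTE; rewrite negb_and negbK; apply/orP; left.
  by apply/subsetP => /(_ v vs); rewrite !inE eqxx.
have Heq : v |: ((setT :\ v) :\: s) = setT :\: s.
  apply/setP => x; rewrite !inE andbT; case: (eqVneq x v) => [->|]; by rewrite ?vs.
have sub : s \subset [set: 'I_m] :\ v.
  by apply/subsetP => x xs; rewrite !inE andbT; apply/eqP => e; rewrite -e xs in vs.
rewrite sub eqxx /= Heq andbT.
case Hs: (setT :\: s \in K); rewrite ?andbF //=.
by rewrite (HK _ _ Hs) // setSD // subsetDl.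
Qed.

Lemma del_dual (m : nat) (K : {set {set 'I_m}}) (v : 'I_m) :
  is_complex [set: 'I_m] K ->
  alex_dual ([set: 'I_m] :\ v) (deletion K v) = link (alex_dual [set: 'I_m] K) v.
Proof.
move=> [_ HK]; apply/setP => s; rewrite !inE !subsetT /=.
case vs: (v \in s) => /=; rewrite ?andbF.
  apply/negbTE; rewrite negb_and negbK; apply/orP; left.
  by apply/subsetP => /(_ v vs); rewrite !inE eqxx.
have Heq : (setT :\ v) :\: s = setT :\: (v |: s).
  by apply/setP => x; rewrite !inE; case: (x == v); case: (x \in s).
have sub : s \subset [set: 'I_m] :\ v.
  by apply/subsetP => x xs; rewrite !inE andbT; apply/eqP => e; rewrite -e xs in vs.
rewrite sub eqxx /= Heq.
rewrite andbT.
case Hs: (setT :\: (v |: s) \in K); rewrite ?andbF //= andbT.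
case Hs2: (setT :\: s \in K) => //=.
by rewrite (HK _ _ Hs2) in Hs => //; apply: setDS; apply: subsetUr.
Qed.

Theorem lemma2p3 (m : nat) (K : {set {set 'I_m}}) (v : 'I_m) :
  is_complex [set: 'I_m] K ->
  vdec [set: 'I_m] (alex_dual [set: 'I_m] K) ->
  shedding_vertex [set: 'I_m] (alex_dual [set: 'I_m] K) v ->
  vdec ([set: 'I_m] :\ v) (alex_dual ([set: 'I_m] :\ v) (link K v)) /\
  vdec ([set: 'I_m] :\ v) (alex_dual ([set: 'I_m] :\ v) (deletion K v)).
Proof.
move=> HK _ [_ Hd Hl _].
by rewrite link_dual // del_dual.
Qed.
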